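(* Let $0<\lambda<1$ and $0<p<1$. Let \[ f(z)=\frac{z}{1-\frac{z}{p}+\lambda z\int_z^p\omega(t)\,dt}, \] where $\omega$ is analytic in $\mathbb{D}=\{z:|z|<1\}$ with $|\omega(z)|\le1$ on $\mathbb{D}$, so that $f\in\mathcal{U}_m(\lambda)$ has a simple pole at $z=p$, and let $f(z)=\sum_{k=-1}^\infty b_k(z-p)^k$ be the Laurent series of $f$ at $z=p$. Then, as $\omega$ ranges over all such functions, the region of variability of the residue $b_{-1}$ is the disk \[ \left\{\frac{-p^2}{1+\lambda p^2u}:\ u\in\overline{\mathbb{D}}\right\}, \] and \[ \frac{p^2}{1+\lambda p^2}\le |b_{-1}|\le \frac{p^2}{1-\lambda p^2}, \] where the upper bound is sharp, with equality attained when $\omega(z)\equiv -1$.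
   Context: For $\lambda\in(0,1)$ and $p\in(0,1)$, $\mathcal{U}_m(\lambda)$ denotes the family of functions $f$ meromorphic in $\mathbb{D}$ with a pole at $z=p$, having a Taylor expansion $f(z)=z+\sum_{k=2}^\infty a_k z^k$ for $|z|<p$, and satisfying $\left|\frac{z}{f(z)}-z\left(\frac{z}{f(z)}\right)'-1\right|<\lambda$ for every $z\in\mathbb{D}$. The integral is along any path in $\mathbb{D}$ from $z$ to $p$. *)

(* Defs.v *)
From Stdlib Require Import Reals.
From Coquelicot Require Import Coquelicot.
Open Scope C_scope.

Definition in_unit_disk (z : C) : Prop := (Cmod z < 1)%R.

Definition analytic_on_disk (w : C -> C) : Prop :=
  forall z : C, in_unit_disk z -> ex_derive (K := C_AbsRing) (V := C_NormedModule) w z.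

Definition admissible (w : C -> C) : Prop :=
  analytic_on_disk w /\ forall z : C, in_unit_disk z -> (Cmod (w z) <= 1)%R.

(* Integral of w from z to p along the straight segment [z, p]
   (which lies in the convex disk; the integral is path independent there):
   int_z^p w(t) dt = (p - z) * int_0^1 w(z + s (p - z)) ds. *)
Definition seg_int (w : C -> C) (z p : C) : C :=
  (p - z) * RInt (V := C_R_CompleteNormedModule)
              (fun s : R => w (z + RtoC s * (p - z))) 0 1.

Definition f_fun (lam p : R) (w : C -> C) (z : C) : C :=
  z / (1 - z / RtoC p + RtoC lam * z * seg_int w z (RtoC p)).

(* b is the coefficient b_{-1} of the Laurent expansion of f at the (simple)
   pole a: near a (a excluded), f z = b / (z - a) + g z with g holomorphic
   in a neighbourhood of a (g = sum_{k>=0} b_k (z-a)^k). *)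
Definition laurent_residue (f : C -> C) (a b : C) : Prop :=
  exists r : R, (0 < r)%R /\
    exists g : C -> C,
      (forall z, (Cmod (z - a) < r)%R -> ex_derive (K := C_AbsRing) (V := C_NormedModule) g z) /\
      (forall z, (0 < Cmod (z - a) < r)%R -> f z = b / (z - a) + g z).

(* Main.v *)
Require Import Defs.
From Stdlib Require Import Reals Lra.
From Coquelicot Require Import Coquelicot.
Open Scope C_scope.


Lemma cont_eps (w : C -> C) (z : C) :
  ex_derive (K := C_AbsRing) (V := C_NormedModule) w z ->
  forall eps : R, (0 < eps)%R -> exists d : R, (0 < d)%R /\
    forall t, (Cmod (t - z) < d)%R -> (Cmod (w t - w z) < eps)%R.
Proof.
  intros H eps Heps.
  apply ex_derive_continuous in H.
  assert (He2 : (0 < eps/2)%R) by lra.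
  destruct (H _ (locally_ball (w z) (mkposreal (eps/2) He2))) as [d Hd].
  exists d. split. apply cond_pos. intros t Ht.
  pose proof (C_NormedModule_mixin_compat2 _ _ _ (Hd t Ht)) as H1. simpl in H1.
  assert (Hs : (sqrt 2 < 2)%R).
  { pose proof (sqrt_sqrt 2) as Q. pose proof (sqrt_pos 2). nra. }
  change (Cmod (w t - w z) < sqrt 2 * (eps/2))%R in H1. nra.
Qed.

Lemma Cmod_ball (x y : C) (eps : R) :
  (Cmod (y - x) < eps)%R -> @ball C_R_NormedModule x eps y.
Proof.
  intros H. pose proof (Rmax_Cmod (y - x)) as H2.
  destruct x as [x1 x2], y as [y1 y2]. simpl in H2.
  split; simpl; unfold AbsRing_ball, abs, minus, plus, opp; simpl;
  [apply Rle_lt_trans with (2 := H); eapply Rle_trans; [|exact H2]; apply Rmax_l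
  |apply Rle_lt_trans with (2 := H); eapply Rle_trans; [|exact H2]; apply Rmax_r].
Qed.

Lemma ex_RInt_eps (h : R -> C) :
  (forall s, (0 <= s <= 1)%R -> forall eps, (0 < eps)%R -> exists d, (0 < d)%R /\
     forall s', (Rabs (s' - s) < d)%R -> (Cmod (h s' - h s) < eps)%R) ->
  ex_RInt (V := C_R_CompleteNormedModule) h 0 1.
Proof.
  intros H. apply ex_RInt_continuous. intros s Hs.
  rewrite Rmin_left in Hs by lra. rewrite Rmax_right in Hs by lra.
  apply filterlim_locally. intros eps.
  destruct (H s Hs eps (cond_pos eps)) as [d [Hd Hd']].
  exists (mkposreal d Hd). intros s' Hs'. apply Cmod_ball. apply Hd'. exact Hs'.
Qed.
Lemma Cmod_RtoC_mult (s : R) (c : C) : Cmod (RtoC s * c) = (Rabs s * Cmod c)%R.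
Proof. rewrite Cmod_mult, Cmod_R. reflexivity. Qed.

Lemma seg_in (z a : C) (s : R) : (Cmod z < 1)%R -> (Cmod a < 1)%R -> (0 <= s <= 1)%R ->
  (Cmod (z + RtoC s * (a - z)) < 1)%R.
Proof.
  intros Hz Ha Hs.
  replace (z + RtoC s * (a - z)) with (RtoC (1 - s) * z + RtoC s * a)
    by (rewrite RtoC_minus; ring).
  eapply Rle_lt_trans. apply Cmod_triangle.
  rewrite !Cmod_RtoC_mult, !Rabs_pos_eq by lra.
  pose proof (Cmod_ge_0 z). pose proof (Cmod_ge_0 a).
  destruct (Rlt_or_le s 1) as [H1|H1].
  - assert (0 < (1 - s) * (1 - Cmod z))%R by (apply Rmult_lt_0_compat; lra).
    assert (0 <= s * (1 - Cmod a))%R by (apply Rmult_le_pos; lra). nra.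
  - assert (s = 1%R) by lra. subst. lra.
Qed.

Lemma seg_near (z a : C) (s : R) : (0 <= s <= 1)%R ->
  (Cmod (z + RtoC s * (a - z) - a) <= Cmod (z - a))%R.
Proof.
  intros Hs.
  replace (z + RtoC s * (a - z) - a) with (RtoC (1 - s) * (z - a))
    by (rewrite RtoC_minus; ring).
  rewrite Cmod_RtoC_mult, Rabs_pos_eq by lra.
  pose proof (Cmod_ge_0 (z - a)). nra.
Qed.

Lemma scal10 : forall c : C, @scal R_Ring (NormedModule.ModuleSpace _ C_R_NormedModule) (1 - 0)%R c = c.
Proof. intros [u v]. unfold scal; simpl. unfold prod_scal; simpl. unfold scal; simpl. unfold mult; simpl. f_equal; ring. Qed.

Definition Jf (w : C -> C) (z a : C) : C :=
  RInt (V := C_R_CompleteNormedModule) (fun s : R => w (z + RtoC s * (a - z))) 0 1.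

Lemma J_ex (w : C -> C) (z a : C) :
  (forall t, (Cmod t < 1)%R -> ex_derive (K := C_AbsRing) (V := C_NormedModule) w t) ->
  (Cmod z < 1)%R -> (Cmod a < 1)%R ->
  ex_RInt (V := C_R_CompleteNormedModule) (fun s : R => w (z + RtoC s * (a - z))) 0 1.
Proof.
  intros Hw Hz Ha. apply ex_RInt_eps. intros s Hs eps Heps.
  destruct (cont_eps w _ (Hw _ (seg_in z a s Hz Ha Hs)) eps Heps) as [d [Hd Hd']].
  pose proof (Cmod_ge_0 (a - z)).
  exists (d / (Cmod (a - z) + 1))%R. split.
  { apply Rdiv_lt_0_compat; lra. }
  intros s' Hs'. apply Hd'.
  replace (z + RtoC s' * (a - z) - (z + RtoC s * (a - z))) with (RtoC (s' - s) * (a - z))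
    by (rewrite RtoC_minus; ring).
  rewrite Cmod_RtoC_mult.
  apply Rmult_lt_compat_r with (r := (Cmod (a - z) + 1)%R) in Hs'; [|lra].
  unfold Rdiv in Hs'. rewrite Rmult_assoc, Rinv_l in Hs' by lra.
  pose proof (Rabs_pos (s' - s)). nra.
Qed.

Lemma J_bound (w : C -> C) (z a : C) :
  (forall t, (Cmod t < 1)%R -> ex_derive (K := C_AbsRing) (V := C_NormedModule) w t) ->
  (forall t, (Cmod t < 1)%R -> (Cmod (w t) <= 1)%R) ->
  (Cmod z < 1)%R -> (Cmod a < 1)%R -> (Cmod (Jf w z a) <= 1)%R.
Proof.
  intros Hw Hb Hz Ha.
  pose proof (RInt_correct _ _ _ (J_ex w z a Hw Hz Ha)) as HI.
  rewrite Cmod_norm. unfold Jf.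
  replace 1%R with ((1 - 0) * 1)%R at 2 by ring.
  apply (norm_RInt_le_const (V := C_R_NormedModule) (fun s : R => w (z + RtoC s * (a - z))) 0 1); [lra| |exact HI].
  intros x Hx. rewrite <- Cmod_norm. apply Hb, seg_in; auto.
Qed.

Lemma J_cont (w : C -> C) (a : C) :
  (forall t, (Cmod t < 1)%R -> ex_derive (K := C_AbsRing) (V := C_NormedModule) w t) ->
  (Cmod a < 1)%R ->
  forall eps, (0 < eps)%R -> exists d, (0 < d)%R /\ forall z, (Cmod z < 1)%R ->
    (Cmod (z - a) < d)%R -> (Cmod (Jf w z a - w a) <= eps)%R.
Proof.
  intros Hw Ha eps Heps.
  destruct (cont_eps w a (Hw a Ha) eps Heps) as [d [Hd Hd']].
  exists d. split; [exact Hd|]. intros z Hz Hza.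
  pose proof (RInt_correct _ _ _ (J_ex w z a Hw Hz Ha)) as HI.
  pose proof (is_RInt_const (V := C_R_NormedModule) 0 1 (w a)) as HC.
  pose proof (is_RInt_minus _ _ _ _ _ _ HI HC) as HM.
  rewrite scal10 in HM.
  rewrite Cmod_norm. unfold Jf.
  replace eps with ((1 - 0) * eps)%R by ring.
  apply (norm_RInt_le_const (V := C_R_NormedModule) _ 0 1 _ eps ltac:(lra) ) with (2 := HM).
  intros s Hs. rewrite <- Cmod_norm. apply Rlt_le. apply Hd'.
  eapply Rle_lt_trans. apply seg_near. exact Hs. exact Hza.
Qed.

Lemma RtoC_neq0 (r : R) : r <> 0%R -> RtoC r <> 0.
Proof. intros H E. apply H. apply (f_equal fst) in E. simpl in E. exact E. Qed.

Lemma Cmod_minus_le (x y : C) : (Cmod (x - y) <= Cmod x + Cmod y)%R.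
Proof. unfold Cminus. eapply Rle_trans. apply Cmod_triangle. rewrite Cmod_opp. lra. Qed.

Lemma Cmod_rev (x y : C) : (Cmod x - Cmod y <= Cmod (x - y))%R.
Proof.
  pose proof (Cmod_triangle (x - y) y) as H.
  replace (x - y + y) with x in H by ring. lra.
Qed.

Lemma small_zero (X : C) (K : R) :
  (forall eps, (0 < eps)%R -> (Cmod X <= eps * K)%R) -> X = 0.
Proof.
  intros H. apply Cmod_eq_0.
  pose proof (Cmod_ge_0 X).
  destruct (Rle_lt_dec K 0) as [HK|HK].
  - specialize (H 1%R Rlt_0_1). lra.
  - destruct (Req_dec (Cmod X) 0) as [E|E]; auto.
    specialize (H (Cmod X / (2 * K))%R ltac:(apply Rdiv_lt_0_compat; lra)).
    unfold Rdiv in H. rewrite Rinv_mult, Rmult_assoc, (Rmult_assoc (/2)), Rinv_l in H by lra.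
    lra.
Qed.

Lemma forward (lam p : R) (Hlam : (0 < lam < 1)%R) (Hp : (0 < p < 1)%R)
  (w : C -> C) (b : C) :
  admissible w -> laurent_residue (f_fun lam p w) (RtoC p) b ->
  b * (- / RtoC p - RtoC lam * RtoC p * w (RtoC p)) = RtoC p.
Proof.
  intros [Hw Hwb] [r [Hr [g [Hg Hf]]]].
  assert (Hpa : (Cmod (RtoC p) < 1)%R) by (rewrite Cmod_R, Rabs_pos_eq; lra).
  assert (Hp0 : RtoC p <> 0) by (apply RtoC_neq0; lra).
  destruct (cont_eps g (RtoC p) (Hg _ ltac:(replace (RtoC p - RtoC p) with (RtoC 0) by ring; rewrite Cmod_R, Rabs_R0; lra)) 1 Rlt_0_1) as [dg [Hdg Hdg']].
  set (W := w (RtoC p)).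
  set (E0 := - / RtoC p - RtoC lam * RtoC p * W).
  apply Ceq_minus.
  apply (small_zero _ (2 * Cmod b + 1 + (Cmod (g (RtoC p)) + 1) * (/ p + 1))).
  intros eps Heps.
  destruct (J_cont w (RtoC p) Hw Hpa eps Heps) as [dw [Hdw Hdw']].
  set (d := (Rmin (Rmin r (1 - p)) (Rmin dg (Rmin dw eps)) / 2)%R).
  assert (Hd0 : (0 < d)%R).
  { unfold d. repeat apply Rmin_case; lra. }
  assert (Hd1 : (d < r /\ d < 1 - p /\ d < dg /\ d < dw /\ d <= eps)%R).
  { unfold d.
    pose proof (Rmin_l r (1 - p)). pose proof (Rmin_r r (1 - p)).
    pose proof (Rmin_l dw eps). pose proof (Rmin_r dw eps).
    pose proof (Rmin_l dg (Rmin dw eps)). pose proof (Rmin_r dg (Rmin dw eps)).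
    pose proof (Rmin_l (Rmin r (1 - p)) (Rmin dg (Rmin dw eps))).
    pose proof (Rmin_r (Rmin r (1 - p)) (Rmin dg (Rmin dw eps))).
    assert (0 < Rmin (Rmin r (1 - p)) (Rmin dg (Rmin dw eps)))%R by (repeat apply Rmin_case; lra).
    repeat split; lra. }
  set (z := RtoC (p + d)).
  assert (Hzp : z - RtoC p = RtoC d) by (unfold z; rewrite RtoC_plus; ring).
  assert (Hzp' : (Cmod (z - RtoC p) = d)%R) by (rewrite Hzp, Cmod_R, Rabs_pos_eq; lra).
  assert (Hz1 : (Cmod z < 1)%R) by (unfold z; rewrite Cmod_R, Rabs_pos_eq; lra).
  assert (Hzn : z - RtoC p <> 0) by (rewrite Hzp; apply RtoC_neq0; lra).
  set (J := Jf w z (RtoC p)).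
  assert (HJ1 : (Cmod J <= 1)%R) by (apply J_bound; auto).
  assert (HJ2 : (Cmod (J - W) <= eps)%R) by (apply Hdw'; lra).
  set (E := - / RtoC p - RtoC lam * z * J).
  assert (Hlz : (Cmod (RtoC lam * z * J) <= lam * (p + d))%R).
  { rewrite !Cmod_mult, Cmod_R, Rabs_pos_eq by lra. unfold z. rewrite Cmod_R, Rabs_pos_eq by lra.
    rewrite <- (Rmult_1_r (lam * (p + d))) at 2. apply Rmult_le_compat_l; [apply Rmult_le_pos; lra | exact HJ1]. }
  assert (Hip : (Cmod (- / RtoC p) = / p)%R).
  { rewrite Cmod_opp, Cmod_inv, Cmod_R, Rabs_pos_eq by (auto; lra). reflexivity. }
  assert (Hp1 : (1 < / p)%R).
  { rewrite <- Rinv_1. apply Rinv_lt_contravar; lra. }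
  assert (HEn : E <> 0).
  { apply Cmod_gt_0. pose proof (Cmod_rev (- / RtoC p) (RtoC lam * z * J)). unfold E. nra. }
  assert (HEb : (Cmod E <= / p + 1)%R).
  { unfold E. eapply Rle_trans. apply Cmod_minus_le. nra. }
  assert (Hgz : (Cmod (g z) <= Cmod (g (RtoC p)) + 1)%R).
  { pose proof (Hdg' z ltac:(lra)). pose proof (Cmod_triangle (g z - g (RtoC p)) (g (RtoC p))).
    replace (g z - g (RtoC p) + g (RtoC p)) with (g z) in * by ring. lra. }
  assert (HD : 1 - z / RtoC p + RtoC lam * z * seg_int w z (RtoC p) = (z - RtoC p) * E).
  { unfold seg_int, E, J, Jf. field. exact Hp0. }
  pose proof (Hf z ltac:(lra)) as Hfz. unfold f_fun in Hfz. rewrite HD in Hfz.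
  assert (Hb : b = (z / ((z - RtoC p) * E) - g z) * (z - RtoC p)).
  { rewrite Hfz. field. exact Hzn. }
  assert (HbE : b * E = z - (z - RtoC p) * g z * E).
  { rewrite Hb. field. split; auto. }
  assert (HX : b * E0 - RtoC p = b * (RtoC lam * ((z - RtoC p) * J + RtoC p * (J - W)))
                 + (z - RtoC p) - (z - RtoC p) * g z * E).
  { replace (b * E0) with (b * (E0 - E) + b * E) by ring. rewrite HbE. unfold E0, E. ring. }
  rewrite HX.
  eapply Rle_trans. apply Cmod_minus_le.
  eapply Rle_trans. apply Rplus_le_compat_r. apply Cmod_triangle.
  rewrite !Cmod_mult, Hzp', Cmod_R, Rabs_pos_eq by lra.
  assert (Hin : (Cmod ((z - RtoC p) * J + RtoC p * (J - W)) <= d + p * eps)%R).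
  { eapply Rle_trans. apply Cmod_triangle. rewrite !Cmod_mult, Hzp', Cmod_R, Rabs_pos_eq by lra.
    pose proof (Cmod_ge_0 J). nra. }
  pose proof (Cmod_ge_0 b). pose proof (Cmod_ge_0 E). pose proof (Cmod_ge_0 (g z)).
  pose proof (Cmod_ge_0 (g (RtoC p))).
  assert (T1 : (Cmod b * (lam * Cmod ((z - RtoC p) * J + RtoC p * (J - W))) <= Cmod b * (2 * eps))%R).
  { apply Rmult_le_compat_l; auto. pose proof (Cmod_ge_0 ((z - RtoC p) * J + RtoC p * (J - W))). nra. }
  assert (T2 : (d * Cmod (g z) * Cmod E <= eps * ((Cmod (g (RtoC p)) + 1) * (/ p + 1)))%R).
  { assert (Cmod (g z) * Cmod E <= (Cmod (g (RtoC p)) + 1) * (/ p + 1))%R.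
    { apply Rmult_le_compat; auto. }
    rewrite Rmult_assoc. apply Rmult_le_compat; try lra. apply Rmult_le_pos; auto. }
  nra.
Qed.

Lemma is_derive_Cinv (z0 : C) : z0 <> 0 ->
  is_derive (K := C_AbsRing) (V := C_NormedModule) (fun y => / y) z0 (- / (z0 * z0)).
Proof.
  intros Hz0. split.
  { apply is_linear_scal_l. }
  intros x Hx. apply (is_filter_lim_locally_unique (V := AbsRing_NormedModule C_AbsRing)) in Hx. subst x.
  intros eps.
  set (m := Cmod z0).
  assert (Hm : (0 < m)%R) by (apply Cmod_gt_0; exact Hz0).
  assert (Hd : (0 < Rmin (m / 2) (eps * (m * m * m) / 2))%R).
  { apply Rmin_case. lra. pose proof (cond_pos eps). 
    apply Rdiv_lt_0_compat; [|lra]. apply Rmult_lt_0_compat; [lra|]. 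
    repeat apply Rmult_lt_0_compat; lra. }
  exists (mkposreal _ Hd). intros y Hy. change C in y.
  change (Cmod (y - z0) < Rmin (m / 2) (eps * (m * m * m) / 2))%R in Hy.
  change (Cmod (/ y - / z0 - (y - z0) * (- / (z0 * z0))) <= eps * Cmod (y - z0))%R.
  pose proof (Rmin_l (m / 2) (eps * (m * m * m) / 2)).
  pose proof (Rmin_r (m / 2) (eps * (m * m * m) / 2)).
  pose proof (Cmod_rev z0 (z0 - y)) as Hr.
  replace (z0 - (z0 - y)) with y in Hr by ring.
  assert (Hyz : Cmod (z0 - y) = Cmod (y - z0)).
  { replace (z0 - y) with (- (y - z0)) by ring. apply Cmod_opp. }
  assert (Hym : (m / 2 < Cmod y)%R). { change (Cmod z0) with m in Hr. rewrite Hyz in Hr. lra. }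
  assert (Hy0 : y <> 0) by (apply Cmod_gt_0; lra).
  replace (/ y - / z0 - (y - z0) * (- / (z0 * z0))) with ((y - z0) * (y - z0) / (y * (z0 * z0)))
    by (field; auto).
  rewrite Cmod_div by (apply Cmult_neq_0; auto; apply Cmult_neq_0; auto).
  rewrite !Cmod_mult. fold m.
  set (t := Cmod (y - z0)) in *. set (c := Cmod y) in *.
  pose proof (Cmod_ge_0 (y - z0)).
  assert (Hc : (0 < c * (m * m))%R) by (apply Rmult_lt_0_compat; [lra | nra]).
  apply (Rmult_le_reg_r (c * (m * m))); auto.
  unfold Rdiv. rewrite Rmult_assoc, Rinv_l by lra. rewrite Rmult_1_r.
  assert (t <= eps * (c * (m * m)))%R.
  { pose proof (cond_pos eps). 
    assert (eps * (m * m * m) / 2 <= eps * (c * (m * m)))%R.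
    { assert (m * m * m / 2 <= c * (m * m))%R by nra. nra. }
    fold t in Hy. lra. }
  replace (eps * t * (c * (m * m)))%R with (t * (eps * (c * (m * m))))%R by ring.
  apply Rmult_le_compat_l; [change (Cmod (y - z0)) with t in H1; lra | exact H2].
Qed.

Lemma RInt_const_C (u : C) : RInt (V := C_R_CompleteNormedModule) (fun _ : R => u) 0 1 = u.
Proof.
  rewrite RInt_const. destruct u as [u1 u2]. unfold scal; simpl. unfold prod_scal; simpl.
  unfold scal; simpl. unfold mult; simpl. f_equal; ring.
Qed.

Lemma const_case (lam p : R) (Hlam : (0 < lam < 1)%R) (Hp : (0 < p < 1)%R) (u : C) :
  (Cmod u <= 1)%R ->
  admissible (fun _ => u) /\
  laurent_residue (f_fun lam p (fun _ => u)) (RtoC p) (- RtoC (p ^ 2) / (1 + RtoC (lam * p ^ 2) * u)).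
Proof.
  intros Hu. split.
  { split. intros z _. apply ex_derive_const. intros; exact Hu. }
  assert (Hp0 : RtoC p <> 0) by (apply RtoC_neq0; lra).
  set (k := RtoC lam * RtoC p * u).
  assert (Hk : (Cmod k <= lam * p)%R).
  { unfold k. rewrite !Cmod_mult, !Cmod_R, !Rabs_pos_eq by lra.
    rewrite <- (Rmult_1_r (lam * p)) at 2. apply Rmult_le_compat_l; [nra | exact Hu]. }
  assert (Hnz : forall z, (Cmod z < 1)%R -> 1 + k * z <> 0).
  { intros z Hz. apply Cmod_gt_0.
    pose proof (Cmod_rev 1 (- (k * z))) as Hr.
    replace (1 - - (k * z)) with (1 + k * z) in Hr by ring.
    rewrite Cmod_opp, Cmod_mult, Cmod_1 in Hr.
    pose proof (Cmod_ge_0 z). pose proof (Cmod_ge_0 k).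
    assert (Cmod k * Cmod z <= lam * p)%R.
    { apply Rle_trans with (Cmod k * 1)%R. apply Rmult_le_compat_l; lra. lra. }
    nra. }
  assert (Hpa : (Cmod (RtoC p) < 1)%R) by (rewrite Cmod_R, Rabs_pos_eq; lra).
  assert (Hkp : 1 + k * RtoC p <> 0) by (apply Hnz; exact Hpa).
  set (a := - (1 + k * RtoC p) / RtoC p).
  set (k' := - (1 + k * RtoC p) * k / RtoC p).
  assert (Haff : forall z, a + z * k' = - (1 + k * RtoC p) * (1 + k * z) / RtoC p).
  { intros z. unfold a, k'. field. exact Hp0. }
  assert (Hz1 : forall z, (Cmod (z - RtoC p) < 1 - p)%R -> (Cmod z < 1)%R).
  { intros z Hz. pose proof (Cmod_triangle (z - RtoC p) (RtoC p)) as T.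
    replace (z - RtoC p + RtoC p) with z in T by ring. rewrite Cmod_R, Rabs_pos_eq in T by lra. lra. }
  exists (1 - p)%R. split; [lra|].
  exists (fun z => / (a + z * k')). split.
  - intros z Hz.
    assert (Hn : a + z * k' <> 0).
    { rewrite Haff. unfold Cdiv. apply Cmult_neq_0; [apply Cmult_neq_0|].
      - intros E. apply Hkp. replace (1 + k * RtoC p) with (- - (1 + k * RtoC p)) by ring.
        rewrite E. ring.
      - apply Hnz, Hz1, Hz.
      - intros E. pose proof (Cinv_l _ Hp0) as Q. rewrite E, Cmult_0_l in Q. apply C1_nz. symmetry. exact Q. }
    apply (ex_derive_comp (K := C_AbsRing) (V := C_NormedModule) (fun y => / y) (fun z => a + z * k')).
    + eexists. apply is_derive_Cinv. exact Hn.
    + assert (Ht : forall t : C, @plus (AbsRing_NormedModule C_AbsRing) a (@scal C_AbsRing (AbsRing_NormedModule C_AbsRing) t k') = a + t * k') by (intros t; reflexivity).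
      apply (ex_derive_ext (K := C_AbsRing) (V := AbsRing_NormedModule C_AbsRing)
               (fun z => plus a (scal z k')) (fun z => a + z * k') z Ht).
      apply (ex_derive_plus (K := C_AbsRing) (V := AbsRing_NormedModule C_AbsRing) (fun _ => a) (fun z => scal z k')).
      * apply ex_derive_const.
      * exists (@scal C_AbsRing (AbsRing_NormedModule C_AbsRing) one k').
        apply (is_derive_scal_l (K := C_AbsRing) (V := AbsRing_NormedModule C_AbsRing) (fun t => t)).
        apply is_derive_id.
  - intros z Hz.
    assert (Hzp : z - RtoC p <> 0) by (apply Cmod_gt_0; lra).
    assert (Hkz : 1 + k * z <> 0) by (apply Hnz, Hz1; lra).
    unfold f_fun, seg_int. rewrite RInt_const_C. rewrite Haff.
    rewrite !RtoC_mult, !RtoC_pow.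
    assert (E1 : 1 - z / RtoC p + RtoC lam * z * ((RtoC p - z) * u) = (z - RtoC p) * (- (1 + k * z) / RtoC p)).
    { unfold k. field. exact Hp0. }
    rewrite E1.
    assert (E2 : 1 + RtoC lam * RtoC p ^ 2 * u = 1 + k * RtoC p) by (unfold k; ring).
    rewrite E2.
    field. repeat split; auto.
Qed.

Lemma den_bounds (c : R) (u : C) : (0 <= c < 1)%R -> (Cmod u <= 1)%R ->
  (1 - c <= Cmod (1 + RtoC c * u) <= 1 + c)%R.
Proof.
  intros Hc Hu.
  assert (Hcu : (Cmod (RtoC c * u) <= c)%R).
  { rewrite Cmod_mult, Cmod_R, Rabs_pos_eq by lra.
    rewrite <- (Rmult_1_r c) at 2. apply Rmult_le_compat_l; lra. }
  split.
  - pose proof (Cmod_rev 1 (- (RtoC c * u))) as Hr.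
    replace (1 - - (RtoC c * u)) with (1 + RtoC c * u) in Hr by ring.
    rewrite Cmod_opp, Cmod_1 in Hr. lra.
  - eapply Rle_trans. apply Cmod_triangle. rewrite Cmod_1. lra.
Qed.

Lemma forward_formula (lam p : R) (Hlam : (0 < lam < 1)%R) (Hp : (0 < p < 1)%R)
  (w : C -> C) (b : C) :
  admissible w -> laurent_residue (f_fun lam p w) (RtoC p) b ->
  (Cmod (w (RtoC p)) <= 1)%R /\
  b = - RtoC (p ^ 2) / (1 + RtoC (lam * p ^ 2) * w (RtoC p)).
Proof.
  intros Ha Hr.
  pose proof (forward lam p Hlam Hp w b Ha Hr) as Hb.
  assert (Hpa : (Cmod (RtoC p) < 1)%R) by (rewrite Cmod_R, Rabs_pos_eq; lra).
  assert (HW : (Cmod (w (RtoC p)) <= 1)%R) by (apply (proj2 Ha); exact Hpa).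
  split; [exact HW|].
  assert (Hp0 : RtoC p <> 0) by (apply RtoC_neq0; lra).
  assert (Hc : (0 <= lam * p ^ 2 < 1)%R) by (split; nra).
  pose proof (den_bounds _ _ Hc HW) as HQ.
  assert (HQ0 : 1 + RtoC (lam * p ^ 2) * w (RtoC p) <> 0) by (apply Cmod_gt_0; lra).
  set (W := w (RtoC p)) in *.
  assert (Hp2 : RtoC (lam * p ^ 2) = RtoC lam * (RtoC p * RtoC p)) by (rewrite <- !RtoC_mult; f_equal; ring).
  assert (Hp2' : RtoC (p ^ 2) = RtoC p * RtoC p) by (rewrite <- !RtoC_mult; f_equal; ring).
  rewrite Hp2 in HQ0 |- *. rewrite Hp2'.
  assert (E : b = b * (- / RtoC p - RtoC lam * RtoC p * W) *
                  (- RtoC p / (1 + RtoC lam * (RtoC p * RtoC p) * W))).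
  { field. split; auto. }
  rewrite E, Hb. field. auto.
Qed.

Theorem corollary2 (lam p : R) (Hlam : (0 < lam < 1)%R) (Hp : (0 < p < 1)%R) :
  (* region of variability of b_{-1} *)
  (forall b : C,
     (exists w : C -> C, admissible w /\ laurent_residue (f_fun lam p w) (RtoC p) b)
     <-> (exists u : C, (Cmod u <= 1)%R /\
            b = - RtoC (p ^ 2) / (1 + RtoC (lam * p ^ 2) * u)))
  /\
  (* bounds on |b_{-1}| *)
  (forall (w : C -> C) (b : C),
     admissible w -> laurent_residue (f_fun lam p w) (RtoC p) b ->
     (p ^ 2 / (1 + lam * p ^ 2) <= Cmod b <= p ^ 2 / (1 - lam * p ^ 2))%R)
  /\
  (* sharpness of the upper bound: omega = -1 *)
  (exists b : C,
     laurent_residue (f_fun lam p (fun _ => -1)) (RtoC p) b /\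
     Cmod b = (p ^ 2 / (1 - lam * p ^ 2))%R).
Proof.
  assert (Hc : (0 <= lam * p ^ 2 < 1)%R) by (split; nra).
  assert (Hp2 : (0 < p ^ 2)%R) by nra.
  assert (Hmod : forall u, (Cmod u <= 1)%R ->
     Cmod (- RtoC (p ^ 2) / (1 + RtoC (lam * p ^ 2) * u)) =
     (p ^ 2 / Cmod (1 + RtoC (lam * p ^ 2) * u))%R).
  { intros u Hu. pose proof (den_bounds _ _ Hc Hu).
    rewrite Cmod_div by (apply Cmod_gt_0; lra).
    rewrite Cmod_opp, Cmod_R, Rabs_pos_eq by lra. reflexivity. }
  split; [|split].
  - intros b. split.
    + intros [w [Ha Hr]]. exists (w (RtoC p)). apply (forward_formula lam p Hlam Hp w b Ha Hr).
    + intros [u [Hu ->]]. exists (fun _ => u). apply const_case; auto.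
  - intros w b Ha Hr.
    destruct (forward_formula lam p Hlam Hp w b Ha Hr) as [HW ->].
    rewrite Hmod by exact HW.
    pose proof (den_bounds _ _ Hc HW) as [H1 H2].
    split; unfold Rdiv; apply Rmult_le_compat_l; try lra;
      apply Rinv_le_contravar; lra.
  - destruct (const_case lam p Hlam Hp (-1) ltac:(rewrite Cmod_R; unfold Rabs; destruct Rcase_abs; lra)) as [_ Hr].
    eexists. split. exact Hr.
    rewrite Hmod by (rewrite Cmod_R; unfold Rabs; destruct Rcase_abs; lra).
    f_equal.
    replace (1 + RtoC (lam * p ^ 2) * -1) with (RtoC (1 - lam * p ^ 2)) by (rewrite RtoC_minus; ring).
    rewrite Cmod_R, Rabs_pos_eq; lra.
Qed.
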